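(* Let $\mathcal K$ be a finite-dimensional complex Hilbert space and let $U$ be a unitary on $\mathbb C^2\otimes\mathcal K$. Define $K=(\langle0|\otimes I)\,U\,(|0\rangle\otimes I)$, so that $U(|0\rangle\otimes|\varphi\rangle)=|0\rangle\otimes K|\varphi\rangle+|1\rangle\otimes|\mathrm{junk}_\varphi\rangle$ for every $|\varphi\rangle\in\mathcal K$. Suppose $K$ is an orthogonal projector. Let $\tilde U$ be any unitary on $\mathbb C^2\otimes\mathcal K$, let $K'=(\langle0|\otimes I)\,\tilde U\,(|0\rangle\otimes I)$, and suppose that $\tilde U$ preserves the action of $K$ up to a scalar, i.e. for every $|\varphi\rangle\in\mathcal K$ there is a scalar $\lambda(\varphi)\in\mathbb C$ with $K'|\varphi\rangle=\lambda(\varphi)K|\varphi\rangle$. Then for every $|\varphi\rangle\in\mathcal K$, $\|K'|\varphi\rangle\|^2\le\|K|\varphi\rangle\|^2$; that is, the success probability of post-selecting the ancilla in $|0\rangle$ cannot be increased.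
   Context: $\|K|\varphi\rangle\|^2$ is the probability of obtaining outcome $0$ when measuring the ancilla (first tensor factor) after applying $U$ to $|0\rangle\otimes|\varphi\rangle$ for a normalized $|\varphi\rangle$; $\tilde U$ models an (oblivious) amplitude amplification protocol. *)

(* Defs.v *)
From HB Require Import structures.
From mathcomp Require Import all_boot all_order all_algebra.
Set Implicit Arguments. Unset Strict Implicit. Unset Printing Implicit Defensive.
Import Order.TTheory GRing.Theory Num.Theory.
Local Open Scope ring_scope.

(* The Hilbert space K is C^n (column vectors),
   and C^2 (x) K is C^(n+n), where the first block of n coordinates is
   |0> (x) K and the second block is |1> (x) K. *)

Definition adjmx (C : numClosedFieldType) m n (A : 'M[C]_(m, n)) : 'M[C]_(n, m) :=
  (map_mx Num.conj A)^T.

Definition q_unitary (C : numClosedFieldType) m (U : 'M[C]_m) : Prop :=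
  adjmx U *m U = 1%:M.

Definition q_orth_projector (C : numClosedFieldType) n (P : 'M[C]_n) : Prop :=
  P *m P = P /\ adjmx P = P.

Definition ket0I (C : numClosedFieldType) n : 'M[C]_(n + n, n) := col_mx 1%:M 0.
Definition bra0I (C : numClosedFieldType) n : 'M[C]_(n, n + n) := row_mx 1%:M 0.

Definition Kop (C : numClosedFieldType) n (U : 'M[C]_(n + n)) : 'M[C]_n :=
  bra0I C n *m U *m ket0I C n.

Definition normsq (C : numClosedFieldType) n (v : 'cV[C]_n) : C :=
  \sum_(i < n) `|v i 0| ^+ 2.

(* Main.v *)
Require Import Defs.
From HB Require Import structures.
From mathcomp Require Import all_boot all_order all_algebra.
Import Order.TTheory GRing.Theory Num.Theory.
Local Open Scope ring_scope.

Lemma normsqE (C : numClosedFieldType) n (v : 'cV[C]_n) :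
  normsq v = (adjmx v *m v) 0 0.
Proof.
rewrite /normsq mxE; apply: eq_bigr => i _; rewrite !mxE normCK mulrC.
by [].
Qed.

Lemma adjmxM (C : numClosedFieldType) m n p (A : 'M[C]_(m, n)) (B : 'M[C]_(n, p)) :
  adjmx (A *m B) = adjmx B *m adjmx A.
Proof. by rewrite /adjmx map_mxM trmx_mul. Qed.

Lemma normsq_unitary (C : numClosedFieldType) m (U : 'M[C]_m) v :
  q_unitary U -> normsq (U *m v) = normsq v.
Proof.
move=> HU; rewrite !normsqE adjmxM -mulmxA (mulmxA (adjmx U)) HU mul1mx //.
Qed.

Lemma normsq_col (C : numClosedFieldType) m n (a : 'cV[C]_m) (b : 'cV[C]_n) :
  normsq (col_mx a b) = normsq a + normsq b.
Proof.
rewrite /normsq big_split_ord; congr (_ + _); apply: eq_bigr => i _.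
  by rewrite col_mxEu.
by rewrite col_mxEd.
Qed.

Lemma normsq_ge0 (C : numClosedFieldType) n (v : 'cV[C]_n) : 0 <= normsq v.
Proof. by apply: sumr_ge0 => i _; apply: exprn_ge0. Qed.

Lemma normsq0 (C : numClosedFieldType) n : normsq (0 : 'cV[C]_n) = 0.
Proof. by apply: big1 => i _; rewrite mxE normr0 expr0n. Qed.

Lemma contraction (C : numClosedFieldType) n (Ut : 'M[C]_(n + n)) v :
  q_unitary Ut -> normsq (Kop Ut *m v) <= normsq v.
Proof.
move=> HU.
set w := Ut *m (ket0I C n *m v).
have Hw : Kop Ut *m v = usubmx w.
  rewrite /Kop /w -!mulmxA; set x := Ut *m _.
  by rewrite -{1}(vsubmxK x) /bra0I mul_row_col mul1mx mul0mx addr0.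
have : normsq w = normsq v.
  rewrite /w normsq_unitary // /ket0I mul_col_mx mul1mx mul0mx normsq_col normsq0.
  by rewrite addr0.
rewrite Hw -{1}(vsubmxK w) normsq_col => <-.
by rewrite lerDl normsq_ge0.
Qed.

Theorem lemma1 (C : numClosedFieldType) (n : nat) (U Ut : 'M[C]_(n + n)) :
  q_unitary U ->
  q_orth_projector (Kop U) ->
  q_unitary Ut ->
  (forall phi : 'cV[C]_n, exists lam : C, Kop Ut *m phi = lam *: (Kop U *m phi)) ->
  forall phi : 'cV[C]_n, normsq (Kop Ut *m phi) <= normsq (Kop U *m phi).
Proof.
move=> _ [HP _] HUt Hlam phi.
have H0 : Kop Ut *m (phi - Kop U *m phi) = 0.
  have [lam ->] := Hlam (phi - Kop U *m phi).
  by rewrite mulmxBr mulmxA HP subrr scaler0.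
have -> : Kop Ut *m phi = Kop Ut *m (Kop U *m phi).
  by move: H0; rewrite mulmxBr => /eqP; rewrite subr_eq0 => /eqP.
exact: contraction.
Qed.
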